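(* Let $k\ge2$ be an integer. The closure of $\bar\Gamma(2)_k$ in $\mathrm{PSL}_2(\hat{\mathbb{Z}}_{\mathrm{odd}})$ is equal to $\hat D_{\mathrm{odd}}$.
   Context: $\bar\Gamma(2)=\Gamma(2)/\{\pm1\}\subset\mathrm{PSL}_2(\mathbb{Z})$; its lower central series is $\bar\Gamma(2)_1=\bar\Gamma(2)$, $\bar\Gamma(2)_{k+1}=[\bar\Gamma(2)_k,\bar\Gamma(2)]$. Let $\hat{\mathbb{Z}}_{\mathrm{odd}}=\varprojlim_{n\text{ odd}}\mathbb{Z}/n\mathbb{Z}\cong\prod_{p\ne2}\mathbb{Z}_p$, and view $\mathrm{PSL}_2(\mathbb{Z})\subset\mathrm{PSL}_2(\hat{\mathbb{Z}}_{\mathrm{odd}})$ with its profinite topology. $D_3\subset\mathrm{PSL}_2(\mathbb{Z}/3\mathbb{Z})$ is the index-$3$ Klein four-subgroup consisting of the classes of $\pm I$, $\pm\begin{pmatrix}0&-1\\1&0\end{pmatrix}$, $\pm\begin{pmatrix}-1&1\\1&1\end{pmatrix}$, $\pm\begin{pmatrix}1&1\\1&-1\end{pmatrix}$, and $\hat D_{\mathrm{odd}}$ is its inverse image in $\mathrm{PSL}_2(\hat{\mathbb{Z}}_{\mathrm{odd}})$ under reduction modulo $3$. *)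

(* Defs.v *)
From HB Require Import structures.
From mathcomp Require Import all_boot all_order all_algebra.
Set Implicit Arguments. Unset Strict Implicit. Unset Printing Implicit Defensive.
Import Order.TTheory GRing.Theory Num.Theory.
Local Open Scope ring_scope.

Notation mxZ := ('M[int]_2).

Definition mx2 (a b c d : int) : mxZ :=
  \matrix_(i < 2, j < 2)
    if (i == 0 :> nat) then (if (j == 0 :> nat) then a else b)
    else (if (j == 0 :> nat) then c else d).

Definition eqmod_mx (n : nat) (A B : mxZ) : Prop :=
  forall i j, (A i j = B i j %[mod n%:Z])%Z.

(* A = +-B modulo n : equality of the images in PSL_2(Z/nZ) *)
Definition pm_eqmod (n : nat) (A B : mxZ) : Prop :=
  eqmod_mx n A B \/ eqmod_mx n A (- B).

(* Gamma(2) = { A in SL_2(Z) | A = I mod 2 }; it contains -I, so it is the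
   full preimage of \bar Gamma(2) in SL_2(Z). *)
Definition Gamma2 (A : mxZ) : Prop := \det A = 1 /\ eqmod_mx 2 A 1%:M.

(* subgroup of SL_2(Z) generated by a set S of determinant-one matrices
   (inverse of a det-1 matrix is its adjugate) *)
Inductive gen_sub (S : mxZ -> Prop) : mxZ -> Prop :=
  | gen_base A : S A -> gen_sub S A
  | gen_one : gen_sub S 1%:M
  | gen_mul A B : gen_sub S A -> gen_sub S B -> gen_sub S (A *m B)
  | gen_inv A : gen_sub S A -> gen_sub S (\adj A).

Definition commSL (A B : mxZ) : mxZ := \adj A *m \adj B *m A *m B.

(* LCS k = preimage in SL_2(Z) of the k-th lower central series term
   \bar Gamma(2)_k of \bar Gamma(2) = Gamma(2)/{+-1}:
   LCS 1 = Gamma(2), LCS (k+1) = < -I, [a,b] : a in LCS k, b in Gamma(2) >. *)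
Fixpoint LCS (k : nat) : mxZ -> Prop :=
  match k with
  | 0 | 1 => Gamma2
  | k'.+1 => gen_sub (fun C => C = - 1%:M \/
                      exists a b, LCS k' a /\ Gamma2 b /\ C = commSL a b)
  end.

(* \hat Z_odd = lim_{n odd} Z/nZ : compatible families z n (n odd) *)
Definition zhat_odd (z : nat -> int) : Prop :=
  forall m n, odd n -> (m %| n)%N -> (z n = z m %[mod m%:Z])%Z.

(* an element of SL_2(\hat Z_odd): a family X n (n odd) of integer
   matrices, entrywise in \hat Z_odd, with det = 1 mod n.  Its class in
   PSL_2(\hat Z_odd) is {X, -X}. *)
Definition SL2_Zodd (X : nat -> mxZ) : Prop :=
  (forall i j, zhat_odd (fun n => X n i j)) /\
  (forall n, odd n -> (\det (X n) = 1 %[mod n%:Z])%Z).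

(* The class of X lies in the closure, in PSL_2(\hat Z_odd) with its
   profinite topology, of the image of H (a subset of SL_2(Z)).  Basic
   neighbourhoods of the class of X are the classes of the Y with
   Y = +-X modulo n (n odd). *)
Definition in_closure (H : mxZ -> Prop) (X : nat -> mxZ) : Prop :=
  forall n, odd n -> exists h, H h /\ pm_eqmod n h (X n).

Definition D3 : seq mxZ :=
  [:: 1%:M; mx2 0 (-1) 1 0; mx2 (-1) 1 1 1; mx2 1 1 1 (-1)].

Definition in_Dhat_odd (X : nat -> mxZ) : Prop :=
  exists2 d, d \in D3 & pm_eqmod 3 (X 3%N) d.

(* Main.v *)
Require Import Defs.
From HB Require Import structures.
From mathcomp Require Import all_boot all_order all_algebra.
From mathcomp Require Import ring.
Set Implicit Arguments. Unset Strict Implicit. Unset Printing Implicit Defensive.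
Import Order.TTheory GRing.Theory Num.Theory.
Lemma coprime_shift (x y z : nat) : 0 < z ->
  (forall l, prime l -> l %| z -> l %| x -> l %| y -> False) ->
  exists t, coprime (x + t * y) z.
Proof.
move=> z0 H.
pose t := \prod_(l <- primes z | ~~ (l %| x)) l.
exists t.
have tP l : prime l -> l %| t -> ~~ (l %| x).
  move=> pl; rewrite Euclid_dvd_prod // big_has_cond => /hasP [l' l'in] /andP [nx ll'].
  move: l'in; rewrite mem_primes => /and3P [pl' _ _].
  by move: ll'; rewrite dvdn_prime2 // => /eqP ->.
have tP2 l : prime l -> l %| z -> ~~ (l %| x) -> l %| t.
  move=> pl lz nx; rewrite /t (big_rem l) /=; last by rewrite mem_primes pl z0 lz.
  by rewrite nx dvdn_mulr.
apply/negPn/negP => ncop.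
have g1 : 1 < gcdn (x + t * y) z.
  rewrite ltn_neqAle eq_sym ncop /= gcdn_gt0 z0 orbT //.
set l := pdiv (gcdn (x + t * y) z).
have pl : prime l by apply: pdiv_prime.
have ldg : l %| gcdn (x + t * y) z by apply: pdiv_dvd.
have lz : l %| z by apply: dvdn_trans ldg (dvdn_gcdr _ _).
have lxy : l %| x + t * y by apply: dvdn_trans ldg (dvdn_gcdl _ _).
case lx: (l %| x).
  have lty : l %| t * y by rewrite -(dvdn_addr _ lx).
  move: lty; rewrite Euclid_dvdM // => /orP [lt|ly].
    by move: (tP l pl lt); rewrite lx.
  exact: (H l pl lz lx ly).
have lt := tP2 l pl lz (negbT lx).
have lty : l %| t * y by apply: dvdn_mulr.
by move: lxy; rewrite dvdn_addl // lx.
Qed.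
Local Open Scope ring_scope.

Section M2.
Variable R : comNzRingType.
Definition m2 (a b c d : R) : 'M[R]_2 :=
  \matrix_(i < 2, j < 2)
    if (i == 0 :> nat) then (if (j == 0 :> nat) then a else b)
    else (if (j == 0 :> nat) then c else d).

Lemma m2E a b c d : let M := m2 a b c d in
  [/\ M 0 0 = a, M 0 1 = b, M 1 0 = c & M 1 1 = d].
Proof. by rewrite /m2 !mxE. Qed.

Lemma m2_eta (M : 'M[R]_2) : M = m2 (M 0 0) (M 0 1) (M 1 0) (M 1 1).
Proof.
apply/matrixP => i j; rewrite !mxE.
by case: i => [[|[|//]] Hi]; case: j => [[|[|//]] Hj] /=; congr (M _ _); apply: val_inj.
Qed.

Lemma m2_inj a b c d a' b' c' d' :
  a = a' -> b = b' -> c = c' -> d = d' -> m2 a b c d = m2 a' b' c' d'.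
Proof. by move=> -> -> -> ->. Qed.

Lemma m2_mul a b c d a' b' c' d' :
  m2 a b c d *m m2 a' b' c' d' =
  m2 (a*a' + b*c') (a*b' + b*d') (c*a' + d*c') (c*b' + d*d').
Proof.
apply/matrixP => i j; rewrite !mxE !big_ord_recr big_ord0 /= !mxE add0r.
by case: i => [[|[|//]] Hi]; case: j => [[|[|//]] Hj].
Qed.

Lemma m2_det a b c d : \det (m2 a b c d) = a * d - b * c.
Proof.
rewrite (expand_det_row _ 0) !big_ord_recr big_ord0 /= add0r.
rewrite /cofactor !det_mx11 !mxE /=.
rewrite !expr0 !expr1 !mul1r.
rewrite /= ?mxE /=. ring.
Qed.

Lemma m2_adj a b c d : \adj (m2 a b c d) = m2 d (-b) (-c) a.
Proof.
apply/matrixP => i j; rewrite !mxE /cofactor det_mx11 !mxE.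
by case: i => [[|[|//]] Hi]; case: j => [[|[|//]] Hj]; rewrite /= ?expr0 ?expr1 ?mul1r ?mulN1r ?expr2 ?mulrNN ?mul1r.
Qed.

Lemma m2_1 : 1%:M = m2 1 0 0 1 :> 'M[R]_2.
Proof. apply/matrixP => i j; rewrite !mxE.
by case: i => [[|[|//]] Hi]; case: j => [[|[|//]] Hj]. Qed.

Lemma m2_opp a b c d : - m2 a b c d = m2 (-a) (-b) (-c) (-d).
Proof. apply/matrixP => i j; rewrite !mxE.
by case: i => [[|[|//]] Hi]; case: j => [[|[|//]] Hj]. Qed.

Lemma m2_add a b c d a' b' c' d' : m2 a b c d + m2 a' b' c' d' = m2 (a+a') (b+b') (c+c') (d+d').
Proof. apply/matrixP => i j; rewrite !mxE.
by case: i => [[|[|//]] Hi]; case: j => [[|[|//]] Hj]. Qed.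

Lemma m2_muln a b c d k : m2 a b c d *+ k = m2 (a *+ k) (b *+ k) (c *+ k) (d *+ k).
Proof. apply/matrixP => i j; rewrite mulmxnE !mxE.
by case: i => [[|[|//]] Hi]; case: j => [[|[|//]] Hj]. Qed.
End M2.
Lemma intr_Zp_eq0 (N : nat) (z : int) : (1 < N)%N ->
  ((z%:~R : 'Z_N) = 0) <-> (N%:Z %| z)%Z.
Proof.
move=> N1; rewrite dvdzE /=.
have H (k : nat) : ((k%:R : 'Z_N) = 0) <-> (N %| k)%N.
  split=> [/(congr1 val)|/dvdnP[q ->]].
    by rewrite /= val_Zp_nat //= => /eqP.
  by rewrite natrM pchar_Zp // mulr0.
case: z => k /=; first by exact: H.
rewrite NegzE rmorphN /= -H; split.
  by move/eqP; rewrite oppr_eq0 => /eqP.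
by move=> E; apply/eqP; rewrite oppr_eq0; apply/eqP.
Qed.

Lemma eqmod_Zp (N : nat) (x y : int) : (1 < N)%N ->
  (x = y %[mod N%:Z])%Z <-> ((x%:~R : 'Z_N) = y%:~R).
Proof.
move=> N1; split.
  move/eqP; rewrite eqz_mod_dvd => /(intr_Zp_eq0 _ N1) .
  by rewrite rmorphB /= => /eqP; rewrite subr_eq0 => /eqP.
move=> E; apply/eqP; rewrite eqz_mod_dvd; apply/(intr_Zp_eq0 _ N1).
by rewrite rmorphB /= E subrr.
Qed.
Lemma map_m2 (R S : comNzRingType) (f : R -> S) a b c d :
  map_mx f (m2 a b c d) = m2 (f a) (f b) (f c) (f d).
Proof. apply/matrixP => i j; rewrite !mxE.
by case: i => [[|[|//]] Hi]; case: j => [[|[|//]] Hj]. Qed.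

Lemma adj_opp2 (R : comNzRingType) (A : 'M[R]_2) : \adj (- A) = - \adj A.
Proof. by rewrite [A]m2_eta m2_opp !m2_adj m2_opp opprK. Qed.

Lemma det_opp2 (R : comNzRingType) (A : 'M[R]_2) : \det (- A) = \det A.
Proof. rewrite [A]m2_eta m2_opp !m2_det; ring. Qed.

Lemma det_adj2 (R : comNzRingType) (A : 'M[R]_2) : \det (\adj A) = \det A.
Proof. rewrite [A]m2_eta m2_adj !m2_det; ring. Qed.

Definition commR (R : comNzRingType) (A B : 'M[R]_2) := \adj A *m \adj B *m A *m B.

Lemma commR_oppl (R : comNzRingType) (A B : 'M[R]_2) : commR (- A) B = commR A B.
Proof. by rewrite /commR adj_opp2 !(mulNmx, mulmxN) opprK. Qed.

Definition phiN (N : nat) (A : 'M[int]_2) : 'M['Z_N]_2 := map_mx (fun z => z%:~R) A.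

Lemma phiN_mul N A B : phiN N (A *m B) = phiN N A *m phiN N B.
Proof. exact: map_mxM. Qed.
Lemma phiN_adj N A : phiN N (\adj A) = \adj (phiN N A).
Proof. exact: map_mx_adj. Qed.
Lemma phiN_det N A : \det (phiN N A) = (\det A)%:~R.
Proof. exact: det_map_mx. Qed.
Lemma phiN_opp N A : phiN N (- A) = - phiN N A.
Proof. exact: map_mxN. Qed.
Lemma phiN_1 N : phiN N 1%:M = 1%:M.
Proof. exact: map_mx1. Qed.
Lemma phiN_comm N A B : phiN N (commSL A B) = commR (phiN N A) (phiN N B).
Proof. by rewrite /commSL /commR !phiN_mul !phiN_adj. Qed.

Lemma eqmx_Zp N (A B : 'M[int]_2) : (1 < N)%N ->
  eqmod_mx N A B <-> phiN N A = phiN N B.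
Proof.
move=> N1; split.
  by move=> H; apply/matrixP => i j; rewrite !mxE; apply/eqmod_Zp => //; apply: H.
by move=> /matrixP H i j; apply/eqmod_Zp => //; move: (H i j); rewrite !mxE.
Qed.

Lemma pm_Zp N (A B : 'M[int]_2) : (1 < N)%N ->
  pm_eqmod N A B <-> (phiN N A = phiN N B \/ phiN N A = - phiN N B).
Proof.
move=> N1; rewrite /pm_eqmod !eqmx_Zp // phiN_opp; tauto.
Qed.

Lemma Gamma2_mul A B : Gamma2 A -> Gamma2 B -> Gamma2 (A *m B).
Proof.
move=> [dA mA] [dB mB]; split; first by rewrite det_mulmx dA dB mulr1.
apply/eqmx_Zp => //; move/eqmx_Zp: mA => /(_ isT) mA; move/eqmx_Zp: mB => /(_ isT) mB.
by rewrite phiN_mul mA mB phiN_1 mulmx1.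
Qed.

Lemma det_LCS k A : LCS k A -> \det A = 1.
Proof.
elim: k A => [A [] //|k IH A].
case: k IH => [_ [] //|k IH].
elim=> [C [->|[a [b [la [[db _] ->]]]]]| | A' B' _ dA _ dB | A' _ dA].
- by rewrite m2_1 m2_opp m2_det; ring.
- by rewrite /commSL !det_mulmx !det_adj2 (IH a la) db; ring.
- by rewrite det1.
- by rewrite det_mulmx dA dB mulr1.
- by rewrite det_adj2.
Qed.


Section Gen.
Variable R : comNzRingType.
Implicit Types t h z y u v w C : R.

Lemma id_E12 t h y : t * h = 1 ->
  commR (m2 h 0 0 t) (m2 1 (- y) 0 1) = m2 1 ((t*t - 1) * y) 0 1.
Proof. move=> H; rewrite /commR !m2_adj !m2_mul; apply: m2_inj; ring: H. Qed.

Lemma id_E21 t h y : t * h = 1 ->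
  commR (m2 h 0 0 t) (m2 1 0 (t * t * y) 1) = m2 1 0 ((t*t - 1) * y) 1.
Proof. move=> H; rewrite /commR !m2_adj !m2_mul; apply: m2_inj; ring: H. Qed.

Lemma id_W t h : t * h = 1 ->
  commR (m2 h 0 0 t) (m2 0 (-1) 1 0) = m2 (t * t) 0 0 (h * h).
Proof. move=> H; rewrite /commR !m2_adj !m2_mul; apply: m2_inj; ring: H. Qed.

Lemma id_WH u v w C : u * v = 1 -> C * C * w = u - 1 ->
  m2 u 0 0 v = m2 1 0 (C * (- (w * v))) 1 *m m2 1 (C * 1) 0 1 *m m2 1 0 (C * w) 1
               *m m2 1 (C * (- v)) 0 1.
Proof. move=> H1 H2; rewrite !m2_mul; apply: m2_inj; ring: H1 H2. Qed.

Lemma id_j1 t h q : t * h = 1 ->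
  (t*t + (t+1)*(t+1)*q)*(h*h) = 1 + (t+1)*((t+1)*(q*h*h)).
Proof. move=> H; ring: H. Qed.

Lemma id_j2 t h q : t * h = 1 ->
  (t*t*t*t - (t+1)*(t+1) + (t+1)*(t+1)*q) * ((h*h)*(h*h)) = 1 + (t+1)*((t+1)*((q - 1)*((h*h)*(h*h)))).
Proof. move=> H; ring: H. Qed.
End Gen.

Lemma id_LDU (R : comNzRingType) (p1 u q1 r s : R) : p1 * u = 1 -> p1 * s = 1 + q1 * r ->
  m2 p1 q1 r s = m2 1 0 (r * u) 1 *m m2 p1 0 0 u *m m2 1 (u * q1) 0 1.
Proof.
move=> H1 H2.
have Hs : s = u + u * q1 * r.
  by rewrite -[s]mulr1 -H1; ring: H2.
rewrite !m2_mul; apply: m2_inj; rewrite ?Hs; ring: H1.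
Qed.

Lemma id_dg (R : comNzRingType) (p u X Y : R) : X * Y = 1 ->
  m2 p 0 0 u = m2 X 0 0 Y *m m2 (p * Y) 0 0 (u * X).
Proof. move=> F; rewrite m2_mul; apply: m2_inj; ring: F. Qed.

Lemma id_unit2 (R : comNzRingType) (p u X Y : R) : X * Y = 1 -> p * u = 1 ->
  (p * Y) * (u * X) = 1.
Proof. move=> F G; ring: F G. Qed.

Lemma id_hh3 (R : comNzRingType) (h : R) : 2 * h = 1 -> h = - (1 + (- h) *+ 3).
Proof.
move=> H; rewrite mulNrn opprD opprK mulrSr -mulr_natl H; ring.
Qed.


Section ZN.
Variable n : nat.
Hypothesis n_odd : odd n.
Hypothesis n_gt1 : (1 < n)%N.
Local Notation R := ('Z_n).
Local Notation phi := (phiN n).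

Definition hh : R := ((n.+1)./2)%:R.
Lemma two_h : 2 * hh = 1.
Proof.
rewrite /hh -natrM.
have -> : (2 * (n.+1)./2)%N = n.+1.
  by rewrite -[in RHS](odd_double_half n.+1) /= n_odd /= add0n -muln2 mulnC.
by rewrite -addn1 natrD pchar_Zp // add0r.
Qed.

Section Psi.
Variable l : nat.
Hypothesis l_gt1 : (1 < l)%N.
Hypothesis l_n : (l %| n)%N.
Definition psi (x : R) : 'Z_l := (val x)%:R.

Lemma psi_nat k : psi k%:R = k%:R.
Proof.
rewrite /psi /= val_Zp_nat // [in RHS](divn_eq k n) natrD natrM.
have -> : (n%:R : 'Z_l) = 0 by rewrite -(divnK l_n) natrM pchar_Zp // mulr0.
by rewrite mulr0 add0r.
Qed.
Lemma psiD x y : psi (x + y) = psi x + psi y.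
Proof. by rewrite -[x]natr_Zp -[y]natr_Zp -natrD !psi_nat natrD. Qed.
Lemma psiM x y : psi (x * y) = psi x * psi y.
Proof. by rewrite -[x]natr_Zp -[y]natr_Zp -natrM !psi_nat natrM. Qed.
Lemma psiN x : psi (- x) = - psi x.
Proof. by apply/eqP; rewrite -subr_eq0 opprK -psiD addNr -(natr_Zp 0) psi_nat. Qed.
Lemma psiB x y : psi (x - y) = psi x - psi y.
Proof. by rewrite psiD psiN. Qed.
Lemma psi1 : psi 1 = 1.
Proof. by rewrite -(natr_Zp 1) psi_nat. Qed.
Lemma psi0E x : (psi x == 0) = (l %| val x)%N.
Proof. by rewrite /psi -(natr_Zp 0) -val_eqE /= !val_Zp_nat // mod0n. Qed.
End Psi.

Lemma unit_shift (p y : R) :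
  (forall l, prime l -> (l %| n)%N -> psi l p = 0 -> psi l y = 0 -> False) ->
  exists t : nat, (p + t%:R * y) \is a GRing.unit.
Proof.
move=> H.
have [t ct] : exists t, coprime (val p + t * val y) n.
  apply: coprime_shift; first by apply: ltnW.
  by move=> l pl ln lp ly; apply: (H l pl ln); apply/eqP; rewrite psi0E //; exact: prime_gt1.
exists t; rewrite -[p]natr_Zp -[y]natr_Zp -natrM -natrD unitZpE // coprime_sym.
by [].
Qed.


Lemma Zl0 (l k : nat) : (1 < l)%N -> ((k%:R : 'Z_l) = 0) <-> (l %| k)%N.
Proof.
move=> l1; split=> [/(congr1 val)|/dvdnP[q ->]].
  by rewrite /= val_Zp_nat //= => /eqP.
by rewrite natrM pchar_Zp // mulr0.
Qed.

Lemma four_h : (2 * 2) * (hh * hh) = 1 :> R.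
Proof. by rewrite mulrACA two_h mulr1. Qed.

Section Decomp.
Variable P : 'M[R]_2 -> Prop.
Variable c : nat.
Hypothesis Hc : c = 1%N \/ c = 3%N.
Hypothesis PM : forall A B, P A -> P B -> P (A *m B).
Hypothesis PE12 : forall y, P (m2 1 (c%:R * y) 0 1).
Hypothesis PE21 : forall y, P (m2 1 0 (c%:R * y) 1).
Local Notation C := (c%:R : R).

Lemma P_1 : P 1%:M.
Proof. by move: (PE12 0); rewrite mulr0 m2_1. Qed.

Lemma P_WH u v w : u * v = 1 -> C * C * w = u - 1 -> P (m2 u 0 0 v).
Proof. by move=> H1 H2; rewrite (id_WH H1 H2); apply: PM; [apply: PM; [apply: PM|]|]. Qed.

Hypothesis PD : P (m2 (2 * 2) 0 0 (hh * hh)).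

Lemma P_dg j : P (m2 ((2 * 2) ^+ j) 0 0 ((hh * hh) ^+ j)).
Proof.
elim: j => [|j IH]; first by rewrite !expr0 -m2_1; apply: P_1.
have -> : m2 ((2 * 2) ^+ j.+1) 0 0 ((hh * hh) ^+ j.+1) =
   m2 (2 * 2) 0 0 (hh * hh) *m m2 ((2 * 2) ^+ j) 0 0 ((hh * hh) ^+ j).
  by rewrite m2_mul !exprS; apply: m2_inj; ring.
by apply: PM.
Qed.

Lemma jlem (al : R) : exists j w, (1 + C * al) * (hh * hh) ^+ j = 1 + C * (C * w).
Proof.
case: Hc => ->.
  by exists 0%N, al; rewrite expr0; ring.
rewrite -[al]natr_Zp (divn_eq (val al) 3) natrD natrM.
set q := ((val al) %/ 3)%:R.
have : ((val al) %% 3 < 3)%N by rewrite ltn_mod.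
case: ((val al) %% 3)%N => [|[|[|//]]] _.
- by exists 0%N, q; rewrite expr0 mulr1; ring.
- exists 1%N, (q * hh * hh); rewrite expr1.
  transitivity ((2*2 + (2+1)*(2+1)*q)*(hh*hh)); first by ring.
  by rewrite id_j1 ?two_h //; ring.
- exists 2%N, ((q - 1) * ((hh * hh) * (hh * hh))); rewrite expr2.
  transitivity ((2*2*2*2 - (2+1)*(2+1) + (2+1)*(2+1)*q) * ((hh*hh)*(hh*hh))); first by ring.
  by rewrite id_j2 ?two_h //; ring.
Qed.

Lemma P_dgu (p u : R) : p * u = 1 -> (exists al, p = 1 + C * al) -> P (m2 p 0 0 u).
Proof.
move=> pu [al Ep]; have [j [w Hw]] := jlem al; rewrite -Ep in Hw.
have F : (2 * 2) ^+ j * (hh * hh) ^+ j = 1 :> R by rewrite -exprMn four_h expr1n.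
rewrite (id_dg p u F).
apply: PM; first exact: P_dg.
apply: (@P_WH _ _ w); last by rewrite Hw; ring.
exact: id_unit2.
Qed.

Lemma P_decomp a b c' d :
  \det (m2 (1 + C * a) (C * b) (C * c') (1 + C * d)) = 1 ->
  P (m2 (1 + C * a) (C * b) (C * c') (1 + C * d)).
Proof.
rewrite m2_det => Hdet.
set p := 1 + C * a; set q := C * b; set r := C * c'; set s := 1 + C * d.
have Hdet' : p * s - q * r = 1 by exact: Hdet.
have [t ut] : exists t : nat, (p + t%:R * (C * r)) \is a GRing.unit.
  apply: unit_shift => l pl ln Hp Hy.
  have l1 := prime_gt1 pl.
  have Ecr : C * r = (c * val r)%:R by rewrite natrM natr_Zp.
  move: Hy; rewrite Ecr psi_nat // => /(Zl0 _ l1); rewrite Euclid_dvdM // => /orP [lc|lr].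
    case: Hc => Ec; first by move: lc; rewrite Ec dvdn1 => /eqP l_1; rewrite l_1 in pl.
    have C0 : (c%:R : 'Z_l) = 0 by apply/Zl0.
    move: Hp; rewrite /p (psiD l1 ln) (psiM l1 ln) (psi_nat l1 ln) C0 mul0r addr0 (psi1 l1 ln).
    by move/eqP; rewrite oner_eq0.
  have r0 : psi l r = 0 by apply/eqP; rewrite (psi0E l1).
  move: (congr1 (psi l) Hdet'); rewrite (psiB l1 ln) (psiM l1 ln p s) (psiM l1 ln q r) r0 Hp (psi1 l1 ln) !mul0r mulr0 subr0.
  by move/eqP; rewrite eq_sym oner_eq0.
set T : R := t%:R.
set p1 := p + T * (C * r).
have -> : m2 p q r s = m2 1 (C * (- T)) 0 1 *m m2 p1 (C * (b + T * s)) r s.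
  by rewrite m2_mul; apply: m2_inj; rewrite /p1 /q; ring.
apply: PM; first exact: PE12.
set u := p1^-1.
have p1u : p1 * u = 1 by rewrite mulrV.
rewrite (@id_LDU _ p1 u); last first.
  have -> : p1 * s = (p * s - q * r) + C * (b + T * s) * r by rewrite /p1 /q; ring.
  by rewrite Hdet'.
- exact: p1u.
apply: PM; [apply: PM|].
- by rewrite /r -mulrA; apply: PE21.
- apply: P_dgu => //; exists (a + T * (C * c')); rewrite /p1 /p /r; ring.
- by rewrite mulrCA; apply: PE12.
Qed.

End Decomp.


Definition G2img (M : 'M[R]_2) := exists Z, Gamma2 Z /\ phi Z = M.

Lemma G2_mul A B : G2img A -> G2img B -> G2img (A *m B).
Proof.
move=> [Z1 [g1 <-]] [Z2 [g2 <-]]; exists (Z1 *m Z2); split; first exact: Gamma2_mul.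
exact: phiN_mul.
Qed.

Lemma intr_nat (N : nat) (k : nat) : ((k%:Z)%:~R : 'Z_N) = k%:R.
Proof. by []. Qed.

Lemma G2_E (y : R) : G2img (m2 1 y 0 1) /\ G2img (m2 1 0 y 1).
Proof.
pose k := ((n.+1)./2 * val y)%N.
have Ek : (((2 * k)%N%:Z)%:~R : R) = y.
  by rewrite intr_nat !natrM natr_Zp mulrA two_h mul1r.
have E2 : (((2 * k)%N%:Z)%:~R : 'Z_2) = 0.
  by rewrite intr_nat natrM pchar_Zp // mul0r.
split.
- exists (m2 1 (2 * k)%N%:Z 0 1); split; last by rewrite /phiN map_m2 Ek rmorph0 rmorph1.
  split; first by rewrite m2_det; ring.
  apply/eqmx_Zp => //; rewrite /phiN map_m2 E2 rmorph0 rmorph1 map_mx1 m2_1 //.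
- exists (m2 1 0 (2 * k)%N%:Z 1); split; last by rewrite /phiN map_m2 Ek rmorph0 rmorph1.
  split; first by rewrite m2_det; ring.
  apply/eqmx_Zp => //; rewrite /phiN map_m2 E2 rmorph0 rmorph1 map_mx1 m2_1 //.
Qed.

Lemma G2_all M : \det M = 1 -> G2img M.
Proof.
move=> dM.
have Hc : 1%N = 1%N \/ 1%N = 3%N by left.
have PE12 y : G2img (m2 1 (1%:R * y) 0 1) by case: (G2_E (1%:R * y)).
have PE21 y : G2img (m2 1 0 (1%:R * y) 1) by case: (G2_E (1%:R * y)).
have PD : G2img (m2 (2 * 2) 0 0 (hh * hh)).
  apply: (@P_WH _ 1%N G2_mul PE12 PE21 _ _ 3); first exact: four_h.
  by ring.
have := @P_decomp _ 1%N Hc G2_mul PE12 PE21 PD (M 0 0 - 1) (M 0 1) (M 1 0) (M 1 1 - 1).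
have -> : m2 (1 + 1%:R * (M 0 0 - 1)) (1%:R * M 0 1) (1%:R * M 1 0) (1 + 1%:R * (M 1 1 - 1)) = M.
  by rewrite [RHS]m2_eta; apply: m2_inj; ring.
by apply.
Qed.

Definition Reach k (M : 'M[R]_2) := exists H, LCS k H /\ (phi H = M \/ phi H = - M).

Lemma Reach_opp k M : Reach k M -> Reach k (- M).
Proof. by move=> [H [lH [E|E]]]; exists H; split=> //; [right; rewrite E opprK | left; rewrite E]. Qed.

Lemma Reach_mul k A B : (2 <= k)%N -> Reach k A -> Reach k B -> Reach k (A *m B).
Proof.
case: k => [//|]; case=> [//|k] _ [H1 [l1 E1]] [H2 [l2 E2]].
exists (H1 *m H2); split; first exact: gen_mul.
rewrite phiN_mul; case: E1 => ->; case: E2 => ->;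
  rewrite ?mulNmx ?mulmxN ?opprK; tauto.
Qed.

Lemma Reach_comm k A B : (1 <= k)%N -> Reach k A -> \det B = 1 -> Reach k.+1 (commR A B).
Proof.
case: k => [//|k] _ [H [lH EH]] dB.
have [Z [gZ EZ]] := G2_all dB.
exists (commSL H Z); split.
  by apply: gen_base; right; exists H, Z.
by left; rewrite phiN_comm EZ; case: EH => ->; rewrite ?commR_oppl.
Qed.

Lemma Reach1 M : \det M = 1 -> Reach 1 M.
Proof. by move=> /G2_all [Z [gZ EZ]]; exists Z; split => //; left. Qed.

Definition D4 (d : 'M[R]_2) := [\/ d = m2 1 0 0 1, d = m2 0 (-1) 1 0,
   d = m2 (-1) 1 1 1 | d = m2 1 1 1 (-1)].
Definition InD (M : 'M[R]_2) := \det M = 1 /\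
   exists (d N : 'M[R]_2), D4 d /\ (M = d + N *+ 3 \/ M = - (d + N *+ 3)).
Definition Full k := forall M, InD M -> Reach k M.

Lemma Full1 : Full 1.
Proof. by move=> M [dM _]; apply: Reach1. Qed.


Lemma InD_dgh : InD (m2 hh 0 0 2).
Proof.
split; first by rewrite m2_det mulr0 subr0 mulrC two_h.
exists (m2 1 0 0 1), (m2 (- hh) 0 0 (-1)); split; first by constructor 1.
right; rewrite m2_muln m2_add m2_opp; apply: m2_inj.
- exact: id_hh3 two_h.
- by rewrite mul0rn addr0 oppr0.
- by rewrite mul0rn addr0 oppr0.
- ring.
Qed.

Lemma InD_S : InD (m2 0 (-1) 1 0).
Proof.
split; first by rewrite m2_det; ring.
exists (m2 0 (-1) 1 0), 0; split; first by constructor 2.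
by left; rewrite mul0rn addr0.
Qed.

Lemma InD_d4 : InD (m2 1 1 1 2).
Proof.
split; first by rewrite m2_det; ring.
exists (m2 1 1 1 (-1)), (m2 0 0 0 1); split; first by constructor 4.
by left; rewrite m2_muln m2_add; apply: m2_inj; ring.
Qed.

Lemma Full_step k : (1 <= k)%N -> Full k -> Full k.+1.
Proof.
move=> k1 Fk.
have k2 : (2 <= k.+1)%N by [].
have Rh : Reach k (m2 hh 0 0 2) by apply: Fk; exact: InD_dgh.
have t2 : 2 * hh = 1 := two_h.
have Hc : 3%N = 1%N \/ 3%N = 3%N by right.
have QM A B : Reach k.+1 A -> Reach k.+1 B -> Reach k.+1 (A *m B) by apply: Reach_mul.
have QE12 y : Reach k.+1 (m2 1 (3%:R * y) 0 1).
  have -> : m2 1 (3%:R * y) 0 1 = commR (m2 hh 0 0 2) (m2 1 (- y) 0 1).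
    by rewrite (id_E12 y t2); apply: m2_inj => //; ring.
  by apply: Reach_comm => //; rewrite m2_det; ring.
have QE21 y : Reach k.+1 (m2 1 0 (3%:R * y) 1).
  have -> : m2 1 0 (3%:R * y) 1 = commR (m2 hh 0 0 2) (m2 1 0 (2 * 2 * y) 1).
    by rewrite (id_E21 y t2); apply: m2_inj => //; ring.
  by apply: Reach_comm => //; rewrite m2_det; ring.
have QD : Reach k.+1 (m2 (2 * 2) 0 0 (hh * hh)).
  rewrite -(id_W t2); apply: Reach_comm => //; rewrite m2_det; ring.
have Qdec a b c' d : \det (m2 (1 + 3%:R * a) (3%:R * b) (3%:R * c') (1 + 3%:R * d)) = 1 ->
    Reach k.+1 (m2 (1 + 3%:R * a) (3%:R * b) (3%:R * c') (1 + 3%:R * d)).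
  exact: (@P_decomp _ 3%N Hc QM QE12 QE21 QD).
have QK Y : \det Y = 1 -> (exists a b c' d,
      Y = m2 (1 + 3%:R * a) (3%:R * b) (3%:R * c') (1 + 3%:R * d) \/
      Y = - m2 (1 + 3%:R * a) (3%:R * b) (3%:R * c') (1 + 3%:R * d)) -> Reach k.+1 Y.
  move=> dY [a [b [c' [d [E|E]]]]]; rewrite E in dY *; first by apply: Qdec.
  by apply: Reach_opp; apply: Qdec; rewrite -det_opp2.
have Qrep X r : Reach k.+1 r -> \det r = 1 -> Reach k.+1 (X *m \adj r) -> Reach k.+1 X.
  move=> Qr dr QX; have -> : X = X *m \adj r *m r.
    by rewrite -mulmxA mul_adj_mx dr mulmx1.
  exact: QM.
pose r4 : 'M[R]_2 := commR (m2 0 (-1) 1 0) (m2 1 1 0 1).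
pose r3 : 'M[R]_2 := commR (m2 1 1 1 2) (m2 1 1 0 1).
have Er4 : r4 = m2 1 1 1 2 by rewrite /r4 /commR !m2_adj !m2_mul; apply: m2_inj; ring.
have Er3 : r3 = m2 (-1) (-5) 1 4 by rewrite /r3 /commR !m2_adj !m2_mul; apply: m2_inj; ring.
have Q4 : Reach k.+1 r4.
  apply: Reach_comm => //; last by rewrite m2_det; ring.
  by apply: Fk; apply: InD_S.
have Q3 : Reach k.+1 r3.
  apply: Reach_comm => //; last by rewrite m2_det; ring.
  by apply: Fk; apply: InD_d4.
move=> M [dM [d [N [Dd EM]]]].
suff : Reach k.+1 (d + N *+ 3).
  by case: EM => -> // Q; apply: Reach_opp.
have dX : \det (d + N *+ 3) = 1 by case: EM dM => ->; rewrite ?det_opp2.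
have EN := m2_eta N.
move: (N 0 0) (N 0 1) (N 1 0) (N 1 1) EN => a b c' e EN.
case: Dd => Ed.
- apply: QK; first exact: dX.
  exists a, b, c', e; left.
  rewrite Ed EN m2_muln m2_add; apply: m2_inj; ring.
- apply: (Qrep _ (r3 *m r4) (QM _ _ Q3 Q4)).
    by rewrite det_mulmx Er3 Er4 !m2_det; ring.
  apply: QK.
    by rewrite det_mulmx det_adj2 dX det_mulmx Er3 Er4 !m2_det; ring.
  exists (-2 - 9 * a + 5 * b), (-2 - 11 * a + 6 * b), (-3 - 9 * c' + 5 * e), (-4 - 11 * c' + 6 * e); right.
  rewrite Ed EN m2_muln m2_add Er3 Er4 m2_mul m2_adj m2_mul m2_opp; apply: m2_inj; ring.
- apply: (Qrep _ r3 Q3); first by rewrite Er3 m2_det; ring.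
  apply: QK.
    by rewrite det_mulmx det_adj2 dX Er3 !m2_det; ring.
  exists (-2 + 4 * a - b), (-2 + 5 * a - b), (1 + 4 * c' - e), (1 + 5 * c' - e); left.
  rewrite Ed EN m2_muln m2_add Er3 m2_adj m2_mul; apply: m2_inj; ring.
- apply: (Qrep _ r4 Q4); first by rewrite Er4 m2_det; ring.
  apply: QK.
    by rewrite det_mulmx det_adj2 dX Er4 !m2_det; ring.
  exists (2 * a - b), (b - a), (1 + 2 * c' - e), (-1 - c' + e); left.
  rewrite Ed EN m2_muln m2_add Er4 m2_adj m2_mul; apply: m2_inj; ring.
Qed.


Lemma Full_all k : (1 <= k)%N -> Full k.
Proof.
elim: k => [//|k IH] _; case: k IH => [|k] IH; first exact: Full1.
by apply: Full_step => //; apply: IH.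
Qed.

End ZN.


Definition Z3 := 'Z_3.
Definition Q := (Z3 * Z3 * Z3 * Z3)%type.
Definition qmul (x y : Q) : Q :=
  let: (a,b,c,d) := x in let: (a',b',c',d') := y in
  (a*a' + b*c', a*b' + b*d', c*a' + d*c', c*b' + d*d').
Definition qadj (x : Q) : Q := let: (a,b,c,d) := x in (d, -b, -c, a).
Definition qopp (x : Q) : Q := let: (a,b,c,d) := x in (-a, -b, -c, -d).
Definition qdet (x : Q) : Z3 := let: (a,b,c,d) := x in a*d - b*c.
Definition qcomm (x y : Q) : Q := qmul (qmul (qmul (qadj x) (qadj y)) x) y.
Definition V3 : seq Q :=
  [:: (1,0,0,1); (0,-1,1,0); (-1,1,1,1); (1,1,1,-1);
      (-1,0,0,-1); (0,1,-1,0); (1,-1,-1,-1); (-1,-1,-1,1)].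
Definition e3 : seq Z3 := [:: 0; 1; 2].
Lemma e3P (x : Z3) : x \in e3.
Proof.
case: x => m Hm; rewrite /e3 !inE.
case: m Hm => [|[|[|//]]] Hm; apply/or3P; [apply: Or31|apply: Or32|apply: Or33]; apply/eqP/val_inj => //.
Qed.

Definition allQ (P : Q -> bool) :=
  all (fun a => all (fun b => all (fun c => all (fun d => P (a,b,c,d)) e3) e3) e3) e3.

Lemma allQP P : allQ P -> forall x, P x.
Proof.
move=> H [[[a b] c] d].
by move: H => /allP/(_ a (e3P a))/allP/(_ b (e3P b))/allP/(_ c (e3P c))/allP/(_ d (e3P d)).
Qed.

Lemma bf_comm_b : allQ (fun x => allQ (fun y =>
   (qdet x != 1) || (qdet y != 1) || (qcomm x y \in V3))).
Proof. vm_compute. reflexivity. Qed.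

Lemma bf_comm x y : qdet x = 1 -> qdet y = 1 -> qcomm x y \in V3.
Proof.
move=> dx dy; have := allQP bf_comm_b x => /allQP/(_ y).
by rewrite dx dy eqxx.
Qed.

Lemma bf_mul_b : all (fun x => all (fun y => qmul x y \in V3) V3) V3.
Proof. vm_compute. reflexivity. Qed.
Lemma bf_adj_b : all (fun x => qadj x \in V3) V3.
Proof. vm_compute. reflexivity. Qed.
Lemma bf_opp_b : all (fun x => qopp x \in V3) V3.
Proof. vm_compute. reflexivity. Qed.

Lemma bf_mul x y : x \in V3 -> y \in V3 -> qmul x y \in V3.
Proof. by move=> hx hy; move/allP: bf_mul_b => /(_ x hx) /allP /(_ y hy). Qed.
Lemma bf_adj x : x \in V3 -> qadj x \in V3.
Proof. by move=> hx; move/allP: bf_adj_b => /(_ x hx). Qed.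
Lemma bf_opp x : x \in V3 -> qopp x \in V3.
Proof. by move=> hx; move/allP: bf_opp_b => /(_ x hx). Qed.

Definition toQ (M : 'M[Z3]_2) : Q := (M 0 0, M 0 1, M 1 0, M 1 1).
Lemma toQ_m2 a b c d : toQ (m2 a b c d) = (a, b, c, d).
Proof. by rewrite /toQ; case: (m2E a b c d) => -> -> -> ->. Qed.
Lemma toQ_mul A B : toQ (A *m B) = qmul (toQ A) (toQ B).
Proof. by rewrite [A]m2_eta [B]m2_eta m2_mul !toQ_m2. Qed.
Lemma toQ_adj A : toQ (\adj A) = qadj (toQ A).
Proof. by rewrite [A]m2_eta m2_adj !toQ_m2. Qed.
Lemma toQ_opp A : toQ (- A) = qopp (toQ A).
Proof. by rewrite [A]m2_eta m2_opp !toQ_m2. Qed.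
Lemma toQ_det A : qdet (toQ A) = \det A.
Proof. by rewrite [A]m2_eta m2_det !toQ_m2. Qed.
Lemma toQ_comm A B : toQ (commR A B) = qcomm (toQ A) (toQ B).
Proof. by rewrite /commR !toQ_mul !toQ_adj. Qed.

Lemma LCS_inv3 k A : (2 <= k)%N -> LCS k A -> toQ (phiN 3 A) \in V3.
Proof.
case: k => [//|]; case=> [//|k] _.
elim=> [C [->|[a [b [la [[db _] ->]]]]]| | A' B' _ dA _ dB | A' _ dA].
- by rewrite phiN_opp phiN_1 m2_1 m2_opp toQ_m2.
- rewrite phiN_comm toQ_comm; apply: bf_comm; rewrite toQ_det phiN_det.
    by rewrite (@det_LCS k.+1 a la).
  by rewrite db.
- by rewrite phiN_1 m2_1 toQ_m2.
- by rewrite phiN_mul toQ_mul; apply: bf_mul.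
- by rewrite phiN_adj toQ_adj; apply: bf_adj.
Qed.


Lemma mx2_m2 (a b c d : int) : mx2 a b c d = m2 a b c d. Proof. by []. Qed.

Lemma toQ_inj (A B : 'M[Z3]_2) : toQ A = toQ B -> A = B.
Proof.
rewrite [A]m2_eta [B]m2_eta !toQ_m2 => -[-> -> -> ->]; by [].
Qed.

Lemma pm_from_Q (A d : mxZ) :
  toQ (phiN 3 A) = toQ (phiN 3 d) \/ toQ (phiN 3 A) = qopp (toQ (phiN 3 d)) ->
  pm_eqmod 3 A d.
Proof.
move=> H; apply/pm_Zp => //; case: H => E; [left|right]; apply: toQ_inj => //.
by rewrite toQ_opp.
Qed.

Lemma phi3_mx2 (a b c d : int) : toQ (phiN 3 (mx2 a b c d)) = (a%:~R, b%:~R, c%:~R, d%:~R).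
Proof. by rewrite /phiN (_ : mx2 a b c d = m2 a b c d) // map_m2 toQ_m2. Qed.

Lemma phi3_1 : toQ (phiN 3 1%:M) = (1, 0, 0, 1).
Proof. by rewrite phiN_1 m2_1 toQ_m2. Qed.

Lemma V3_D3 (A : mxZ) : toQ (phiN 3 A) \in V3 -> exists2 d, d \in D3 & pm_eqmod 3 A d.
Proof.
move: (toQ (phiN 3 A)) (@pm_from_Q A) => x H.
rewrite /V3 !inE => /orP[/eqP E|/orP[/eqP E|/orP[/eqP E|/orP[/eqP E|
   /orP[/eqP E|/orP[/eqP E|/orP[/eqP E|/eqP E]]]]]]].
- exists 1%:M; first by rewrite /D3 !inE eqxx.
  by apply: H; left; rewrite phi3_1 E.
- exists (mx2 0 (-1) 1 0); first by rewrite /D3 !inE eqxx orbT.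
  by apply: H; left; rewrite phi3_mx2 E; apply/eqP; vm_compute.
- exists (mx2 (-1) 1 1 1); first by rewrite /D3 !inE eqxx !orbT.
  by apply: H; left; rewrite phi3_mx2 E; apply/eqP; vm_compute.
- exists (mx2 1 1 1 (-1)); first by rewrite /D3 !inE eqxx !orbT.
  by apply: H; left; rewrite phi3_mx2 E; apply/eqP; vm_compute.
- exists 1%:M; first by rewrite /D3 !inE eqxx.
  by apply: H; right; rewrite phi3_1 E; apply/eqP; vm_compute.
- exists (mx2 0 (-1) 1 0); first by rewrite /D3 !inE eqxx orbT.
  by apply: H; right; rewrite phi3_mx2 E; apply/eqP; vm_compute.
- exists (mx2 (-1) 1 1 1); first by rewrite /D3 !inE eqxx !orbT.
  by apply: H; right; rewrite phi3_mx2 E; apply/eqP; vm_compute.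
- exists (mx2 1 1 1 (-1)); first by rewrite /D3 !inE eqxx !orbT.
  by apply: H; right; rewrite phi3_mx2 E; apply/eqP; vm_compute.
Qed.

Lemma D4_D3 n (d : mxZ) : d \in D3 -> D4 (phiN n d).
Proof.
rewrite /D3 !inE => /or4P [] /eqP ->.
- by constructor 1; rewrite phiN_1 m2_1.
- constructor 2; rewrite /phiN mx2_m2 map_m2.
  by rewrite rmorph0 rmorph1 rmorphN1.
- constructor 3; rewrite /phiN mx2_m2 map_m2.
  by rewrite rmorph1 rmorphN1.
- constructor 4; rewrite /phiN mx2_m2 map_m2.
  by rewrite rmorph1 rmorphN1.
Qed.

Lemma InD_X n (X : nat -> mxZ) : SL2_Zodd X -> odd n -> (1 < n)%N ->
  forall d, d \in D3 -> pm_eqmod 3 (X 3%N) d -> InD (phiN n (X n)).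
Proof.
move=> [Hz Hdet] n_odd n_gt1 d dD pm.
split.
  rewrite phiN_det; have := Hdet n n_odd; move/(eqmod_Zp _ _ n_gt1) => ->.
  by rewrite rmorph1.
case: (boolP (3 %| n)%N) => [n3|n3].
  have key e : eqmod_mx 3 (X 3%N) e -> exists N : 'M['Z_n]_2, phiN n (X n) = phiN n e + N *+ 3.
    move=> Ee.
    exists (phiN n (\matrix_(i, j) ((X n i j - e i j) %/ 3)%Z)).
    apply/matrixP => i j; rewrite !(mxE, mulmxnE).
    have E1 : (X n i j = e i j %[mod 3%N%:Z])%Z.
      by rewrite (Hz i j 3%N n n_odd n3); apply: Ee.
    have : (3 %| X n i j - e i j)%Z by rewrite -eqz_mod_dvd; apply/eqP.
    move/divzK; set q := (_ %/ 3)%Z => E2.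
    rewrite -[in LHS](subrK (e i j) (X n i j)) -E2.
    ring.
  case: pm => Ee; have [N EN] := key _ Ee.
    by exists (phiN n d), N; split; [apply: D4_D3 | left].
  exists (phiN n d), (- N); split; first by apply: D4_D3.
  by right; rewrite EN phiN_opp mulNrn opprD opprK.
exists (m2 1 0 0 1), ((3%:R : 'Z_n)^-1 *: (phiN n (X n) - 1%:M)); split; first by constructor 1.
left.
have u3 : (3%:R : 'Z_n) \is a GRing.unit.
  by rewrite unitZpE // coprime_sym prime_coprime.
by rewrite scalerMnl -mulr_natr mulVr // scale1r -m2_1 addrC subrK.
Qed.

Theorem proposition13 (k : nat) : (2 <= k)%N ->
  forall X : nat -> 'M[int]_2, SL2_Zodd X ->
    (in_closure (LCS k) X <-> in_Dhat_odd X).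
Proof.
move=> k2 X SL; split.
- move=> cl; have [h [lh pm]] := cl 3%N isT.
  move/pm_Zp: pm => /(_ isT) E.
  apply: V3_D3; have := LCS_inv3 k2 lh.
  case: E => E; first by rewrite E.
  have -> : phiN 3 (X 3%N) = - phiN 3 h by rewrite E opprK.
  by rewrite toQ_opp; apply: bf_opp.
- move=> [d dD pm] m m_odd.
  case: (ltnP 1 m) => [m1|m1].
    have k1 : (0 < k)%N by apply: leq_trans k2.
    have [H [lH EH]] := Full_all m_odd m1 k1 (InD_X SL m_odd m1 dD pm).
    by exists H; split => //; apply/pm_Zp.
  have -> : m = 1%N by case: m m_odd m1 => [|[|]].
  exists 1%:M; split.
    by case: k k2 => [|[|k]] // _; apply: gen_one.
  by left => i j; rewrite !modz1.
Qed.
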